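(* Let $\Sigma=\{1,\square,h,s,t\}$ and let $Z$ be the string rewriting system over $\Sigma$ with the seven rules $h11\to 1h$, $11h\square \to 11s\square$, $1s\to s1$, $\square s\to \square h$, $h1\square \to t11\square$, $1t\to t111$, $\square t\to\square h$. There is no dimension $d\geq 1$ and no family of affine maps $[\sigma](x)=M_\sigma x+v_\sigma$ ($\sigma\in\Sigma$, $M_\sigma\in\mathbb{N}^{d\times d}$, $v_\sigma\in\mathbb{N}^d$) such that every $[\sigma]$ is strictly monotone with respect to $>$ (i.e. $x>y$ implies $[\sigma](x)>[\sigma](y)$), for at least one rule $\ell\to r$ of $Z$ we have $[\ell](x)>[r](x)$ for all $x\in\mathbb{N}^d$, and for every remaining rule $\ell'\to r'$ of $Z$ we have $[\ell'](x)\gtrsim[r'](x)$ for all $x\in\mathbb{N}^d$.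
   Context: Strings are finite words over $\Sigma$; the interpretation is extended to strings by $[s_1 s_2\cdots s_n]=[s_1]\circ[s_2]\circ\cdots\circ[s_n]$ (the empty string being the identity). On $\mathbb{N}^d$: $x>y$ iff $x_1>y_1$ and $x_i\geq y_i$ for all $i\in\{2,\dots,d\}$; $x\gtrsim y$ iff $x_i\geq y_i$ for all $i$. *)

(* Defs.v *)
From mathcomp Require Import all_boot.
From Stdlib Require List.
Set Implicit Arguments. Unset Strict Implicit. Unset Printing Implicit Defensive.

Inductive sym : Type := One | Box | Hs | Ss | Ts.

Definition rule := (seq sym * seq sym)%type.

Definition Z : list rule :=
  [:: ([:: Hs; One; One], [:: One; Hs]);
      ([:: One; One; Hs; Box], [:: One; One; Ss; Box]);
      ([:: One; Ss], [:: Ss; One]);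
      ([:: Box; Ss], [:: Box; Hs]);
      ([:: Hs; One; Box], [:: Ts; One; One; Box]);
      ([:: One; Ts], [:: Ts; One; One; One]);
      ([:: Box; Ts], [:: Box; Hs])].

(* Vectors in N^d (coordinates indexed by 'I_d; coordinate 0 is "x_1"). *)
Definition vec (d : nat) := 'I_d -> nat.

Definition interp (d : nat) (M : sym -> 'I_d -> 'I_d -> nat) (v : sym -> vec d)
  (a : sym) (x : vec d) : vec d :=
  fun i => (\sum_(j < d) M a i j * x j + v a i)%N.

Definition interp_str (d : nat) (M : sym -> 'I_d -> 'I_d -> nat) (v : sym -> vec d)
  (s : seq sym) (x : vec d) : vec d :=
  foldr (fun a y => interp M v a y) x s.

Definition gtv (d : nat) (x y : vec d) : Prop :=
  (forall i : 'I_d, nat_of_ord i = 0 -> y i < x i) /\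
  (forall i : 'I_d, 0 < nat_of_ord i -> y i <= x i).

Definition gev (d : nat) (x y : vec d) : Prop := forall i : 'I_d, y i <= x i.

Definition rule_in (lr : rule) (R : list rule) : Prop := List.In lr R.

(* Main.v *)
Require Import Defs.
From mathcomp Require Import all_boot.
From mathcomp Require Import zify.
From Stdlib Require Import Classical.
Set Implicit Arguments. Unset Strict Implicit. Unset Printing Implicit Defensive.

Fixpoint mp (d : nat) (A : 'I_d -> 'I_d -> nat) (n : nat) : 'I_d -> 'I_d -> nat :=
  match n with
  | 0 => fun i j => nat_of_bool (i == j)
  | n'.+1 => fun i j => \sum_(k < d) A i k * mp A n' k j
  end.

Lemma term_le (d : nat) (F : 'I_d -> nat) k : F k <= \sum_(i < d) F i.
Proof. by rewrite (bigD1 k) //= leq_addr. Qed.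

Lemma sum_delta (d : nat) (F : 'I_d -> nat) i :
  \sum_(k < d) nat_of_bool (i == k) * F k = F i.
Proof.
rewrite (bigD1 i) //= eqxx mul1n big1 ?addn0 // => k /negbTE.
by rewrite eq_sym => ->.
Qed.

Lemma mp_add d (A : 'I_d -> 'I_d -> nat) m n i j :
  mp A (m + n) i j = \sum_(k < d) mp A m i k * mp A n k j.
Proof.
elim: m i j => [|m IH] i j /=; first by rewrite add0n sum_delta.
under eq_bigr => k _ do rewrite IH big_distrr.
rewrite exchange_big /=; apply: eq_bigr => l _.
by rewrite big_distrl /=; apply: eq_bigr => k _; rewrite mulnA.
Qed.

Lemma mp_pos_mul d (A : 'I_d -> 'I_d -> nat) l u m :
  0 < mp A l u u -> 0 < mp A (l * m) u u.
Proof.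
move=> H; elim: m => [|m IH]; first by rewrite muln0 /= eqxx.
rewrite mulnS mp_add; apply: leq_trans (term_le _ u).
by rewrite muln_gt0 H IH.
Qed.

Lemma mp_path d (A : 'I_d -> 'I_d -> nat) (f : nat -> 'I_d) l c :
  (forall c', c <= c' < c + l -> 0 < A (f c') (f c'.+1)) ->
  0 < mp A l (f c) (f (c + l)).
Proof.
elim: l c => [|l IH] c H; first by rewrite addn0 /= eqxx.
rewrite /=; apply: leq_trans (term_le _ (f c.+1)).
rewrite muln_gt0; apply/andP; split.
  by apply: H; rewrite leqnn /= addnS ltnS leq_addr.
rewrite addnS -addSn; apply: IH => c' /andP[h1 h2]; apply: H.
by rewrite (ltnW h1) /= addnS -addSn.
Qed.

Definition Cyc d (A : 'I_d -> 'I_d -> nat) (u : 'I_d) := 0 < mp A d`! u u.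
Definition Dk d (A : 'I_d -> 'I_d -> nat) k (i : 'I_d) :=
  forall n, k <= n -> forall j, mp A n i j <= mp A (n + d`!) i j.

Lemma cyc_D d (A : 'I_d -> 'I_d -> nat) u k : Cyc A u -> Dk A k u.
Proof.
move=> H n _ j; rewrite addnC mp_add.
apply: leq_trans (term_le _ u).
by rewrite -{1}(mul1n (mp A n u j)) leq_mul2r; apply/orP; right; exact: H.
Qed.

Lemma closure_D d (A : 'I_d -> 'I_d -> nat) k i :
  (forall j, 0 < A i j -> Dk A k j) -> Dk A k.+1 i.
Proof.
move=> H [|n] // hn j; rewrite addSn /=.
apply: leq_sum => l _; case: (posnP (A i l)) => [->|hp] //.
by rewrite leq_mul2l (H l hp n hn) orbT.
Qed.

Lemma chain_D d (A : 'I_d -> 'I_d -> nat) k i : ~ Dk A k i ->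
  exists f : nat -> 'I_d, f 0 = i /\ (forall c, c < k -> 0 < A (f c) (f c.+1))
    /\ (forall c, c <= k -> ~ Cyc A (f c)).
Proof.
elim: k i => [|k IH] i nD.
  exists (fun _ => i); split=> //; split=> // c _ hc; apply: nD; exact: cyc_D.
have [j [hj nDj]] : exists j, 0 < A i j /\ ~ Dk A k j.
  apply: NNPP => hn; apply: nD; apply: closure_D => j hj.
  by apply: NNPP => hnj; apply: hn; exists j.
have [g [g0 [gA gC]]] := IH j nDj.
exists (fun c => if c is c'.+1 then g c' else i); split=> //; split.
  by case=> [|c] hc //=; [rewrite g0 | apply: gA].
case=> [|c] hc /=; last by apply: gC.
by move=> hcyc; apply: nD; apply: cyc_D.
Qed.

Lemma all_D d (A : 'I_d -> 'I_d -> nat) i : Dk A d i.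
Proof.
apply: NNPP => nD; have [f [_ [fA fC]]] := chain_D nD.
pose h (c : 'I_d.+1) : 'I_d := f c.
have nh : ~ injective h.
  by move=> hi; have := @leq_card _ _ h hi; rewrite !card_ord ltnn.
have [a [b [hab hne]]] : exists a b, h a = h b /\ a <> b.
  apply: NNPP => hn; apply: nh => a b hab; apply: NNPP => hne; apply: hn.
  by exists a, b.
have key : forall a b : 'I_d.+1, a < b -> h a = h b -> False.
  move=> a' b' lt eq.
  have hpath := @mp_path d A f (b' - a') a'.
  have hle : a' <= b' by apply: ltnW.
  rewrite subnKC // in hpath.
  have hpos := hpath (fun c' hc => fA c' (leq_trans (proj2 (andP hc)) (ltn_ord b' : b' < d.+1))).
  rewrite /h in eq; rewrite -eq in hpos.
  apply: (fC a'); first by rewrite -ltnS.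
  rewrite /Cyc; have /dvdnP[m ->] : (b' - a') %| d`!.
    apply: dvdn_fact; rewrite subn_gt0 lt /=.
    apply: leq_trans (leq_subr _ _) _; by rewrite -ltnS.
  by rewrite mulnC; apply: mp_pos_mul.
case: (ltngtP a b) => [lt|gt|eq].
- exact: key lt hab.
- exact: key gt (esym hab).
- by apply: hne; apply: val_inj.
Qed.

Lemma pump d (A : 'I_d -> 'I_d -> nat) n L i j : d <= n ->
  mp A n i j <= mp A (n + L * d`!) i j.
Proof.
move=> hn; elim: L => [|L IH]; first by rewrite addn0.
apply: leq_trans IH _.
have := @all_D d A i (n + L * d`!) (leq_trans hn (leq_addr _ _)) j.
by rewrite mulSn [d`! + _]addnC addnA.
Qed.

Lemma I_cons d (M : sym -> 'I_d -> 'I_d -> nat) (v : sym -> vec d) a s x :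
  interp_str M v (a :: s) x = interp M v a (interp_str M v s x).
Proof. by []. Qed.

Lemma interp_ones d (M : sym -> 'I_d -> 'I_d -> nat) (v : sym -> vec d) n z i :
  interp_str M v (nseq n One) z i =
  \sum_(j < d) mp (M One) n i j * z j +
  \sum_(m < n) \sum_(j < d) mp (M One) m i j * v One j.
Proof.
elim: n i => [|n IH] i.
  by rewrite big_ord0 addn0 sum_delta.
rewrite -[nseq n.+1 One]/(One :: nseq n One) I_cons /interp.
under eq_bigr => j _ do rewrite (IH j) mulnDr.
rewrite big_split /= big_ord_recl /= sum_delta -!addnA; congr (_ + _).
  under eq_bigr => j _ do rewrite big_distrr /=.
  rewrite exchange_big /=; apply: eq_bigr => k _.
  by rewrite big_distrl /=; apply: eq_bigr => j _; rewrite mulnA.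
rewrite addnC; congr (_ + _).
under eq_bigr => j _ do rewrite big_distrr /=.
rewrite exchange_big /=; apply: eq_bigr => m _.
under eq_bigr => j _ do rewrite big_distrr /=.
rewrite exchange_big /=; apply: eq_bigr => k _.
by rewrite big_distrl /=; apply: eq_bigr => j _; rewrite mulnA.
Qed.

Lemma sum_widen_le (F : nat -> nat) n m : n <= m ->
  \sum_(i < n) F i <= \sum_(i < m) F i.
Proof.
move=> h; rewrite (big_ord_widen m F h) [X in _ <= X](bigID (fun i : 'I_m => i < n)) /=.
exact: leq_addr.
Qed.

Lemma ones_pump d (M : sym -> 'I_d -> 'I_d -> nat) (v : sym -> vec d) n L z :
  d <= n -> gev (interp_str M v (nseq (n + L * d`!) One) z) (interp_str M v (nseq n One) z).
Proof.
move=> hn i; rewrite !interp_ones; apply: leq_add.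
  by apply: leq_sum => j _; rewrite leq_mul2r pump ?orbT.
exact: (sum_widen_le (fun m => \sum_(j < d) mp (M One) m i j * v One j) (leq_addr _ _)).
Qed.

Definition GE d (M : sym -> 'I_d -> 'I_d -> nat) (v : sym -> vec d) (w w' : seq sym) :=
  forall x, gev (interp_str M v w x) (interp_str M v w' x).
Definition GT d (M : sym -> 'I_d -> 'I_d -> nat) (v : sym -> vec d) (w w' : seq sym) :=
  forall x, gtv (interp_str M v w x) (interp_str M v w' x).
Definition rel d (M : sym -> 'I_d -> 'I_d -> nat) (v : sym -> vec d) (P : Prop) (w w' : seq sym) :=
  GE M v w w' /\ (P -> GT M v w w').
Definition SMono d (M : sym -> 'I_d -> 'I_d -> nat) (v : sym -> vec d) :=
  forall (a : sym) (x y : vec d), gtv x y -> gtv (interp M v a x) (interp M v a y).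

Lemma I_cat d (M : sym -> 'I_d -> 'I_d -> nat) (v : sym -> vec d) u w x :
  interp_str M v (u ++ w) x = interp_str M v u (interp_str M v w x).
Proof. exact: foldr_cat. Qed.

Lemma interp_mono d (M : sym -> 'I_d -> 'I_d -> nat) (v : sym -> vec d) a x y :
  gev x y -> gev (interp M v a x) (interp M v a y).
Proof.
move=> h i; rewrite /interp leq_add2r; apply: leq_sum => j _.
by rewrite leq_mul2l h orbT.
Qed.

Lemma I_mono d (M : sym -> 'I_d -> 'I_d -> nat) (v : sym -> vec d) u x y :
  gev x y -> gev (interp_str M v u x) (interp_str M v u y).
Proof. by elim: u => [|a u IH] //= h; apply: interp_mono; apply: IH. Qed.

Lemma I_smono d (M : sym -> 'I_d -> 'I_d -> nat) (v : sym -> vec d) u x y :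
  SMono M v -> gtv x y -> gtv (interp_str M v u x) (interp_str M v u y).
Proof. by move=> hm; elim: u => [|a u IH] //= h; apply: hm; apply: IH. Qed.

Lemma gtv_gev d (x y : vec d) : gtv x y -> gev x y.
Proof.
move=> [h0 h1] i; case: (posnP i) => hi; first by apply: ltnW; apply: h0.
exact: h1.
Qed.

Lemma gev_trans d (x y z : vec d) : gev x y -> gev y z -> gev x z.
Proof. by move=> h1 h2 i; apply: leq_trans (h2 i) (h1 i). Qed.

Lemma gtv_gev_trans d (x y z : vec d) : gtv x y -> gev y z -> gtv x z.
Proof.
move=> [h0 h1] h2; split=> i hi.
  exact: leq_ltn_trans (h2 i) (h0 i hi).
exact: leq_trans (h2 i) (h1 i hi).
Qed.

Lemma gev_gtv_trans d (x y z : vec d) : gev x y -> gtv y z -> gtv x z.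
Proof.
move=> h1 [h0 h2]; split=> i hi.
  exact: leq_trans (h0 i hi) (h1 i).
exact: leq_trans (h2 i hi) (h1 i).
Qed.

Lemma rel_ctx d (M : sym -> 'I_d -> 'I_d -> nat) (v : sym -> vec d) (P : Prop) u w l r :
  SMono M v -> rel M v P l r -> rel M v P (u ++ l ++ w) (u ++ r ++ w).
Proof.
move=> hm [hge hgt]; split=> [x|hP x]; rewrite !I_cat.
  by apply: I_mono; apply: hge.
by apply: I_smono => //; apply: hgt.
Qed.

Lemma rel_trans d (M : sym -> 'I_d -> 'I_d -> nat) (v : sym -> vec d) (P Q : Prop) a b c :
  rel M v P a b -> rel M v Q b c -> rel M v (P \/ Q) a c.
Proof.
move=> [g1 t1] [g2 t2]; split=> [x|[hP|hQ] x].
- exact: gev_trans (g1 x) (g2 x).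
- exact: gtv_gev_trans (t1 hP x) (g2 x).
- exact: gev_gtv_trans (g1 x) (t2 hQ x).
Qed.

Lemma rel_weak d (M : sym -> 'I_d -> 'I_d -> nat) (v : sym -> vec d) (P Q : Prop) a b :
  rel M v P a b -> (Q -> P) -> rel M v Q a b.
Proof. by move=> [g t] h; split=> // hQ; apply: t; apply: h. Qed.

Lemma rel_refl d (M : sym -> 'I_d -> 'I_d -> nat) (v : sym -> vec d) a :
  rel M v False a a.
Proof. by split=> // x i. Qed.

Definition r1 : rule := ([:: Hs; One; One], [:: One; Hs]).
Definition r2 : rule := ([:: One; One; Hs; Box], [:: One; One; Ss; Box]).
Definition r3 : rule := ([:: One; Ss], [:: Ss; One]).
Definition r4 : rule := ([:: Box; Ss], [:: Box; Hs]).
Definition r5 : rule := ([:: Hs; One; Box], [:: Ts; One; One; Box]).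
Definition r6 : rule := ([:: One; Ts], [:: Ts; One; One; One]).
Definition r7 : rule := ([:: Box; Ts], [:: Box; Hs]).

Definition Hyp d (M : sym -> 'I_d -> 'I_d -> nat) (v : sym -> vec d) (lr : rule) :=
  SMono M v /\ GT M v lr.1 lr.2 /\
  (forall lr', rule_in lr' Z -> lr' <> lr -> GE M v lr'.1 lr'.2).

Lemma rule_rel d (M : sym -> 'I_d -> 'I_d -> nat) (v : sym -> vec d) lr rho :
  Hyp M v lr -> rule_in rho Z -> rel M v (lr = rho) rho.1 rho.2.
Proof.
move=> [_ [hgt hge]] hin; split; last by move=> <-.
case: (classic (rho = lr)) => [->|hne] x; first exact: gtv_gev (hgt x).
exact: hge.
Qed.

Lemma rel_conv d (M : sym -> 'I_d -> 'I_d -> nat) (v : sym -> vec d) (P : Prop) a a' b b' :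
  a = a' -> b = b' -> rel M v P a' b' -> rel M v P a b.
Proof. by move=> -> ->. Qed.

Lemma rel_trans2 d (M : sym -> 'I_d -> 'I_d -> nat) (v : sym -> vec d) (P Q : Prop) a b b' c :
  rel M v P a b -> b = b' -> rel M v Q b' c -> rel M v (P \/ Q) a c.
Proof. by move=> h1 <-; apply: rel_trans. Qed.

Lemma rel_pre d (M : sym -> 'I_d -> 'I_d -> nat) (v : sym -> vec d) (P : Prop) u l r :
  SMono M v -> rel M v P l r -> rel M v P (u ++ l) (u ++ r).
Proof. by move=> hm h; have := rel_ctx u [::] hm h; rewrite !cats0. Qed.

Lemma rel_suf d (M : sym -> 'I_d -> 'I_d -> nat) (v : sym -> vec d) (P : Prop) w l r :
  SMono M v -> rel M v P l r -> rel M v P (l ++ w) (r ++ w).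
Proof. by move=> hm h; have := rel_ctx [::] w hm h. Qed.

Ltac inZ := rewrite /rule_in /Z /=; tauto.

Lemma sweep_h d (M : sym -> 'I_d -> 'I_d -> nat) (v : sym -> vec d) lr k w :
  Hyp M v lr ->
  rel M v (0 < k /\ lr = r1) (Hs :: nseq (k + k) One ++ w) (nseq k One ++ Hs :: w).
Proof.
move=> H; have hm := proj1 H.
elim: k => [|k IH]; first by apply: rel_weak (rel_refl _ _ _) _ => [[]].
have hr : rule_in r1 Z by inZ.
have s1 := rel_suf (nseq (k + k) One ++ w) hm (rule_rel H hr).
have s2 := rel_pre [:: One] hm IH.
have s3 := rel_trans s1 s2.
apply: rel_weak (rel_conv _ _ s3) _.
- by rewrite addnS addSn.
- by [].
- by move=> [_ ->]; left.
Qed.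

Lemma sweep_s d (M : sym -> 'I_d -> 'I_d -> nat) (v : sym -> vec d) lr k w :
  Hyp M v lr ->
  rel M v (0 < k /\ lr = r3) (nseq k One ++ Ss :: w) (Ss :: nseq k One ++ w).
Proof.
move=> H; have hm := proj1 H.
elim: k => [|k IH]; first by apply: rel_weak (rel_refl _ _ _) _ => [[]].
have hr : rule_in r3 Z by inZ.
have s1 := rel_pre [:: One] hm IH.
have s2 := rel_suf (nseq k One ++ w) hm (rule_rel H hr).
have s3 := rel_trans s1 s2.
apply: rel_weak s3 _.
by move=> [_ ->]; right.
Qed.

Lemma sweep_t d (M : sym -> 'I_d -> 'I_d -> nat) (v : sym -> vec d) lr k w :
  Hyp M v lr ->
  rel M v (0 < k /\ lr = r6) (nseq k One ++ Ts :: w) (Ts :: nseq (3 * k) One ++ w).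
Proof.
move=> H; have hm := proj1 H.
elim: k => [|k IH]; first by apply: rel_weak (rel_refl _ _ _) _ => [[]].
have hr : rule_in r6 Z by inZ.
have s1 := rel_pre [:: One] hm IH.
have s2 := rel_suf (nseq (3 * k) One ++ w) hm (rule_rel H hr).
have s3 := rel_trans s1 s2.
apply: rel_weak (rel_conv _ _ s3) _.
- by [].
- by rewrite mulnS.
- by move=> [_ ->]; right.
Qed.

Definition str n := Box :: Hs :: nseq n One ++ [:: Box].

Lemma nseq2 j (X : seq sym) : nseq j.+2 One ++ X = nseq j One ++ One :: One :: X.
Proof. by elim: j => //= j ->. Qed.

Lemma nseq1 j (X : seq sym) : nseq j.+1 One ++ X = nseq j One ++ One :: X.
Proof. by elim: j => //= j ->. Qed.

Lemma odd_step d (M : sym -> 'I_d -> 'I_d -> nat) (v : sym -> vec d) lr k :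
  Hyp M v lr ->
  rel M v (lr = r5 \/ lr = r7 \/ (0 < k /\ (lr = r1 \/ lr = r6)))
    (str (k + k).+1) (str (3 * k).+2).
Proof.
move=> H; have hm := proj1 H.
have h5 : rule_in r5 Z by inZ.
have h7 : rule_in r7 Z by inZ.
have s1 := rel_pre [:: Box] hm (sweep_h k [:: One; Box] H).
have s2 := rel_pre (Box :: nseq k One) hm (rule_rel H h5).
have s3 := rel_pre [:: Box] hm (sweep_t k [:: One; One; Box] H).
have s4 := rel_suf (nseq (3 * k) One ++ [:: One; One; Box]) hm (rule_rel H h7).
have s := rel_trans (rel_trans (rel_trans s1 s2) s3) s4.
apply: rel_weak (rel_conv _ _ s) _.
- by rewrite /str -nseq1.
- by rewrite /str -nseq2.
- by move=> [->|[->|[hk [->|->]]]]; tauto.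
Qed.

Lemma even_step d (M : sym -> 'I_d -> 'I_d -> nat) (v : sym -> vec d) lr j :
  Hyp M v lr ->
  rel M v (lr = r1 \/ lr = r2 \/ lr = r3 \/ lr = r4)
    (str (j.+2 + j.+2)) (str j.+2).
Proof.
move=> H; have hm := proj1 H.
have h2 : rule_in r2 Z by inZ.
have h4 : rule_in r4 Z by inZ.
have s1 := rel_pre [:: Box] hm (sweep_h j.+2 [:: Box] H).
have s2 := rel_pre (Box :: nseq j One) hm (rule_rel H h2).
have s3 := rel_pre [:: Box] hm (sweep_s j.+2 [:: Box] H).
have s4 := rel_suf (nseq j.+2 One ++ [:: Box]) hm (rule_rel H h4).
have t1 := rel_trans2 s1 (congr1 (cons Box) (nseq2 j [:: Hs; Box])) s2.
have t2 := rel_trans2 t1 (esym (congr1 (cons Box) (nseq2 j [:: Ss; Box]))) s3.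
have s := rel_trans t2 s4.
apply: rel_weak s _.
have hj : 0 < j.+2 by [].
by move=> [->|[->|[->|->]]]; tauto.
Qed.

Lemma str_pump d (M : sym -> 'I_d -> 'I_d -> nat) (v : sym -> vec d) n L :
  d <= n -> GE M v (str (n + L * d`!)) (str n).
Proof.
move=> hn x.
have se : forall m, str m = [:: Box; Hs] ++ (nseq m One ++ [:: Box]) by [].
rewrite !se !I_cat; apply: I_mono; exact: ones_pump.
Qed.

Theorem mainTheorem2 :
  ~ exists (d : nat) (M : sym -> 'I_d -> 'I_d -> nat) (v : sym -> vec d),
      1 <= d /\
      (forall (a : sym) (x y : vec d), gtv x y -> gtv (interp M v a x) (interp M v a y)) /\
      exists lr : rule,
        rule_in lr Z /\
        (forall x : vec d, gtv (interp_str M v lr.1 x) (interp_str M v lr.2 x)) /\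
        (forall lr' : rule, rule_in lr' Z -> lr' <> lr ->
           forall x : vec d, gev (interp_str M v lr'.1 x) (interp_str M v lr'.2 x)).
Proof.
move=> [d [M [v [hd [hmono [lr [hin [hgt hge]]]]]]]].
have H : Hyp M v lr by split=> //; split.
set N := d.+1 * d`!.
have hN : 0 < N by rewrite muln_gt0 fact_gt0.
set z := N.-1.
have hz : z.+1 = N by rewrite prednK.
have e1 := odd_step (4 * z + 1) H.
have e2 := odd_step (6 * z + 2) H.
have e3 := even_step (9 * z + 2) H.
have c := rel_trans (rel_trans2 e1 (congr1 str (_ : _ = (6 * z + 2 + (6 * z + 2)).+1)) e2)
   (rel_conv (congr1 str (_ : _ = (9 * z + 2).+2 + (9 * z + 2).+2)) (erefl _) e3).
have c' := c ltac:(lia) ltac:(lia).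
have fl : ((lr = r5 \/ lr = r7 \/ 0 < 4 * z + 1 /\ (lr = r1 \/ lr = r6)) \/
        lr = r5 \/ lr = r7 \/ 0 < 6 * z + 2 /\ (lr = r1 \/ lr = r6)) \/
       lr = r1 \/ lr = r2 \/ lr = r3 \/ lr = r4.
  have h0 : 0 < 4 * z + 1 by rewrite addn1.
  move: hin; rewrite /rule_in /Z /= /r1 /r2 /r3 /r4 /r5 /r6 /r7.
  intuition (subst; tauto).
have gt := proj2 c' fl.
have hn : d <= (4 * z + 1 + (4 * z + 1)).+1.
  have : d < N by rewrite /N -{1}(muln1 d.+1) leq_mul2l fact_gt0 orbT.
  lia.
have ge := str_pump M v d.+1 hn.
have E : (4 * z + 1 + (4 * z + 1)).+1 + d.+1 * d`! = (9 * z + 2).+2.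
  rewrite -/N -hz; lia.
rewrite E in ge.
pose x : vec d := fun _ => 0.
have [g0 _] := gt x.
have := g0 (Ordinal hd) erefl.
by rewrite ltnNge ge.
Qed.
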